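(* Let $p$ be a prime, let $H$ be any finite Abelian $p$-group (possibly trivial), and let $G\cong C_p\oplus H$. Let $S$ be a normal sequence over $G$ with $|S|=\mathsf{D}(G)+i-1$, where $i\in\{1,2,\dots,p-1\}$. Then $S=0^iT$, where $T$ is a zero-sumfree sequence over $G$.
   Context: $C_p$ denotes the cyclic group of order $p$. A sequence over a finite Abelian group $G$ (written additively) is a finite multiset of elements of $G$; its length $|S|$ is the number of terms counted with multiplicity, and a subsequence is a sub-multiset. $S$ is a zero-sum sequence if the sum of its terms is $0$; $S$ is zero-sumfree if no non-empty subsequence has sum $0$. The Davenport constant $\mathsf{D}(G)$ is the smallest positive integer $t$ such that every sequence over $G$ of length at least $t$ contains a non-empty zero-sum subsequence. A sequence $S$ over $G$ with $|S|\ge\mathsf{D}(G)$ is normal if every zero-sum subsequence $S'$ of $S$ satisfies $|S'|\le|S|-\mathsf{D}(G)+1$. The notation $0^iT$ denotes the sequence obtained from $T$ by adjoining $i$ copies of $0$. *)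

(* Defs.v *)
From mathcomp Require Import all_boot all_algebra.
Set Implicit Arguments. Unset Strict Implicit. Unset Printing Implicit Defensive.
Import GRing.Theory.
Local Open Scope ring_scope.

(* A sequence over G is a seq G viewed as a multiset. *)

Definition submseq (G : finZmodType) (T S : seq G) : Prop :=
  forall x : G, (count_mem x T <= count_mem x S)%N.

Definition zero_sum (G : finZmodType) (S : seq G) : Prop :=
  \sum_(x <- S) x = 0.

Definition has_nonempty_zs (G : finZmodType) (S : seq G) : Prop :=
  exists T : seq G, [/\ submseq T S, (0 < size T)%N & zero_sum T].

Definition zero_sumfree (G : finZmodType) (S : seq G) : Prop :=
  ~ has_nonempty_zs S.

Definition is_davenport (G : finZmodType) (D : nat) : Prop :=
  [/\ (0 < D)%N,
      (forall S : seq G, (D <= size S)%N -> has_nonempty_zs S)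
    & (forall t : nat, (0 < t)%N ->
         (forall S : seq G, (t <= size S)%N -> has_nonempty_zs S) -> (D <= t)%N)].

Definition normal_seq (G : finZmodType) (D : nat) (S : seq G) : Prop :=
  (D <= size S)%N /\
  (forall S' : seq G, submseq S' S -> zero_sum S' -> (size S' <= size S - D + 1)%N).

(* Main.v *)
Require Import Defs.
From HB Require Import structures.
From mathcomp Require Import all_boot all_order all_algebra all_fingroup all_solvable.
From mathcomp Require Import zify.
Set Implicit Arguments. Unset Strict Implicit. Unset Printing Implicit Defensive.
Import GRing.Theory.
Local Open Scope ring_scope.

Section GAlg.
Variables (G : finZmodType) (F : comNzRingType).

Definition ga : Type := {ffun G -> F}.
HB.instance Definition _ := GRing.Zmodule.on ga.

Definition gmul (a b : ga) : ga := [ffun g => \sum_(h : G) a h * b (g - h)].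
Definition gone : ga := [ffun g => (g == 0)%:R].

Lemma gaE (a b : ga) g : (a + b) g = a g + b g.
Proof. by rewrite ffunE. Qed.

Lemma gmulC : commutative gmul.
Proof.
move=> a b; apply/ffunP=> g; rewrite !ffunE.
rewrite (reindex_inj (inv_inj (subKr g))) /=.
by apply: eq_bigr => h _; rewrite subKr mulrC.
Qed.

Lemma gmul1 : left_id gone gmul.
Proof.
move=> a; apply/ffunP=> g; rewrite !ffunE (bigD1 0) //= big1 ?addr0.
  by rewrite ffunE eqxx mul1r subr0.
by move=> h /negbTE hn; rewrite ffunE hn mul0r.
Qed.

Lemma gmulDl : left_distributive gmul +%R.
Proof.
move=> a b c; apply/ffunP=> g; rewrite !ffunE -big_split /=.
by apply: eq_bigr => h _; rewrite ffunE mulrDl.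
Qed.

Lemma gmulA : associative gmul.
Proof.
move=> a b c; apply/ffunP=> g; rewrite !ffunE.
transitivity (\sum_(k : G) \sum_(h : G) a k * b (h - k) * c (g - h)); last first.
  rewrite exchange_big /=; apply: eq_bigr => h _.
  by rewrite ffunE mulr_suml.
apply: eq_bigr => k _; rewrite ffunE mulr_sumr.
symmetry; rewrite (reindex_inj (addrI k)) /=.
apply: eq_bigr => l _; rewrite mulrA; congr (_ * _ * c _).
  by rewrite addrC addKr.
by rewrite opprD addrA.
Qed.

Lemma gone_neq0 : gone != 0.
Proof.
apply/eqP => /ffunP /(_ 0); rewrite !ffunE eqxx => /eqP; by rewrite oner_eq0.
Qed.

HB.instance Definition _ := GRing.Zmodule_isComNzRing.Build ga
  gmulA gmulC gmul1 gmulDl gone_neq0.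

Lemma gaM (a b : ga) g : (a * b) g = \sum_(h : G) a h * b (g - h).
Proof. by rewrite ffunE. Qed.
Lemma ga1 g : (1 : ga) g = (g == 0)%:R.
Proof. by rewrite ffunE. Qed.
Lemma gaB (a b : ga) g : (a - b) g = a g - b g.
Proof. by rewrite !ffunE. Qed.
Lemma gaN (a : ga) g : (- a) g = - a g.
Proof. by rewrite !ffunE. Qed.
Lemma ga0 g : (0 : ga) g = 0.
Proof. by rewrite !ffunE. Qed.

Definition gX (x : G) : ga := [ffun h => (h == x)%:R].

Lemma gX0 : gX 0 = 1.
Proof. by apply/ffunP => h; rewrite !ffunE. Qed.

Lemma gXD x y : gX (x + y) = gX x * gX y.
Proof.
apply/ffunP => g; rewrite gaM ffunE (bigD1 x) //= big1 ?addr0; last first.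
  by move=> h /negbTE hx; rewrite ffunE hx mul0r.
rewrite !ffunE eqxx mul1r; congr (_%:R).
by rewrite subr_eq addrC.
Qed.

Lemma gXsum (I : Type) (r : seq I) (P : pred I) (f : I -> G) :
  gX (\sum_(i <- r | P i) f i) = \prod_(i <- r | P i) gX (f i).
Proof. exact: (big_morph _ gXD gX0). Qed.

Lemma gXMn x k : gX (x *+ k) = gX x ^+ k.
Proof. elim: k => [|k IH]; first by rewrite mulr0n gX0. by rewrite mulrS exprS gXD IH. Qed.

End GAlg.

Section Nil.
Variables (G : finZmodType) (F : comNzRingType) (r : nat) (e : 'I_r -> G)
  (nord : 'I_r -> nat).
Hypothesis hgen : forall g : G, exists k : 'I_r -> nat, g = \sum_(j < r) e j *+ k j.
Hypothesis hy : forall j, (gX F (e j) - 1) ^+ nord j = 0.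

Local Notation R := (ga G F).
Local Notation X := (gX F).
Definition yy j : R := X (e j) - 1.

Definition inI (x : R) := exists u : {ffun 'I_r -> R}, x == \sum_(j < r) yy j * u j.

Lemma inI0 : inI 0.
Proof. by exists [ffun=> 0]; rewrite big1 // => j _; rewrite ffunE mulr0. Qed.

Lemma inID x z : inI x -> inI z -> inI (x + z).
Proof.
move=> [u /eqP ->] [v /eqP ->]; exists [ffun j => u j + v j].
by rewrite -big_split /=; apply/eqP/eq_bigr => j _; rewrite ffunE mulrDr.
Qed.

Lemma inIM x c : inI x -> inI (x * c).
Proof.
move=> [u /eqP ->]; exists [ffun j => u j * c].
by rewrite mulr_suml; apply/eqP/eq_bigr => j _; rewrite ffunE mulrA.
Qed.

Lemma inIy j c : inI (yy j * c).
Proof.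
exists [ffun i => if i == j then c else 0]; rewrite (bigD1 j) //= big1 ?addr0.
  by rewrite ffunE eqxx.
by move=> i /negbTE hi; rewrite ffunE hi mulr0.
Qed.

Lemma inIX g : inI (1 - X g).
Proof.
have [k ->] := hgen g.
elim/big_ind: _ => [|a b ha hb|j _].
- by rewrite gX0 subrr; exact: inI0.
- have -> : 1 - X (a + b) = (1 - X a) + (1 - X b) * X a.
    by rewrite gXD mulrBl mul1r mulrC addrA subrK.
  by apply: inID => //; apply: inIM.
- rewrite gXMn -opprB subrX1 -mulrN; exact: inIy.
Qed.

Definition uu (g : G) : {ffun 'I_r -> R} := xchoose (inIX g).
Lemma uuP g : 1 - X g = \sum_(j < r) yy j * uu g j.
Proof. exact/eqP/(xchooseP (inIX g)). Qed.

Definition Dstar := (\sum_(j < r) (nord j).-1).+1.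

Lemma nilpotent (I : finType) (s : I -> G) :
  (Dstar <= #|I|)%N -> \prod_(i : I) (1 - X (s i)) = 0.
Proof.
move=> hD.
rewrite (eq_bigr _ (fun i _ => uuP (s i))) bigA_distr_bigA /=.
apply: big1 => phi _.
rewrite big_split /=.
suff -> : \prod_(i : I) yy (phi i) = 0 by rewrite mul0r.
have [j hj] : exists j, (nord j <= #|[pred i | phi i == j]|)%N.
  have [/existsP //|/existsPn hn] :=
    boolP [exists j, (nord j <= #|[pred i | phi i == j]|)%N].
  suff : (#|I| < Dstar)%N by rewrite ltnNge hD.
  rewrite -sum1_card (partition_big phi predT) //= /Dstar ltnS.
  apply: leq_sum => j _; rewrite sum1dep_card.
  have := hn j; rewrite -ltnNge; case: (nord j) => // n; rewrite ltnS.
  by apply: leq_trans; apply: subset_leq_card; apply/subsetP => i; rewrite !inE.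
rewrite (bigID (fun i => phi i == j)) /=.
rewrite (eq_bigr (fun _ => yy j)) => [|i /eqP -> //].
rewrite prodr_const -(subnKC hj) exprD.
by rewrite [yy j ^+ nord j]hy !mul0r.
Qed.

End Nil.

Section Poly.
Variables (K : nzRingType).

Lemma coef_1X0 (q : {poly K}) : ((1 - 'X) * q)`_0 = q`_0.
Proof. by rewrite mulrBl mul1r coefB coefXM /= subr0. Qed.
Lemma coef_1X1 (q : {poly K}) : ((1 - 'X) * q)`_1 = q`_1 - q`_0.
Proof. by rewrite mulrBl mul1r coefB coefXM. Qed.
Lemma coef_1Xc0 (c : K) (q : {poly K}) : ((1 - 'X * c%:P) * q)`_0 = q`_0.
Proof. by rewrite mulrBl mul1r -mulrA coefB coefXM /= subr0. Qed.
Lemma coef_1Xc1 (c : K) (q : {poly K}) : ((1 - 'X * c%:P) * q)`_1 = q`_1 - c * q`_0.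
Proof. by rewrite mulrBl mul1r -mulrA coefB coefXM /= coefCM. Qed.
End Poly.

Section Main.
Variables (G : finZmodType) (p : nat).
Hypothesis hp : prime p.
Local Notation F := 'F_p.
Local Notation R := (ga G F).
Local Notation X := (gX F).
Definition eps (a : R) : F := a 0.

Lemma epsB a b : eps (a - b) = eps a - eps b.
Proof. by rewrite /eps gaB. Qed.
Lemma eps0 : eps 0 = 0.
Proof. by rewrite /eps ga0. Qed.
Lemma epsX x : eps (X x) = (x == 0)%:R.
Proof. by rewrite /eps ffunE eq_sym. Qed.
Lemma eps1 : eps 1 = 1.
Proof. by rewrite /eps ga1 eqxx. Qed.
Lemma epsN a : eps (- a) = - eps a.
Proof. by rewrite /eps gaN. Qed.

Lemma map_1X (q : {poly R}) :
  map_poly eps ((1 - 'X) * q) = (1 - 'X) * map_poly eps q.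
Proof.
apply/polyP => k; rewrite coef_map_id0 ?eps0 //.
rewrite !mulrBl !mul1r !coefB !coefXM coef_map_id0 ?eps0 //.
case: k => [|k] /=; first by rewrite !subr0.
by rewrite epsB coef_map_id0 ?eps0.
Qed.

Lemma map_1Xn n (q : {poly R}) :
  map_poly eps ((1 - 'X) ^+ n * q) = (1 - 'X) ^+ n * map_poly eps q.
Proof.
elim: n => [|n IH]; first by rewrite !expr0 !mul1r.
by rewrite !exprS -!mulrA map_1X IH.
Qed.

Definition PP (S : seq G) : {poly R} := \prod_(x <- S) (1 - 'X * (X x)%:P).

Lemma PP0 S : (PP S)`_0 = 1.
Proof.
elim: S => [|x S IH]; first by rewrite /PP big_nil coefC.
by rewrite /PP big_cons coef_1Xc0 IH.
Qed.

Lemma PP1 S : eps (PP S)`_1 = - (count_mem 0 S)%:R.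
Proof.
elim: S => [|x S IH]; first by rewrite /PP big_nil coefC eps0 oppr0.
rewrite /PP big_cons coef_1Xc1 epsB -/(PP S) IH PP0 mulr1 epsX /=.
by rewrite natrD opprD addrC eq_sym.
Qed.

Lemma coef_1Xn0 n : (((1 - 'X) ^+ n) : {poly F})`_0 = 1.
Proof.
elim: n => [|n IH]; first by rewrite expr0 coefC.
by rewrite exprS coef_1X0 IH.
Qed.
Lemma coef_1Xn1 n : (((1 - 'X) ^+ n) : {poly F})`_1 = - n%:R.
Proof.
elim: n => [|n IH]; first by rewrite expr0 coefC oppr0.
by rewrite exprS coef_1X1 IH coef_1Xn0 -opprD -natr1.
Qed.


Variable D : nat.
Hypothesis hnil : forall (I : finType) (s : I -> G),
  (D <= #|I|)%N -> \prod_(k : I) (1 - X (s k)) = 0.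
Variables (S : seq G) (i : nat).
Hypothesis hsize : (size S + 1 = D + i)%N.

Lemma PP_div : exists Q, PP S = (1 - 'X) ^+ i * Q.
Proof.
set n := size S.
have -> : PP S = \prod_(k < n) (1 - 'X * (X (nth 0 S k))%:P).
  by rewrite /PP (big_nth 0) big_mkord.
pose Dl (k : 'I_n) : R := 1 - X (nth 0 S k).
pose Fk (k : 'I_n) (b : bool) : {poly R} := if b then 'X * (Dl k)%:P else 1 - 'X.
rewrite (eq_bigr (fun k => \sum_(b : bool) Fk k b)); last first.
  move=> k _; rewrite big_bool /Fk /Dl /=.
  by rewrite polyCB mulrBr mulr1 addrC addrA subrK.
rewrite bigA_distr_bigA /=.
pose Qf (phi : {ffun 'I_n -> bool}) : {poly R} :=
  let A := [set k | phi k] in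
  if (#|A| < D)%N then
    'X ^+ #|A| * (\prod_(k in A) Dl k)%:P * (1 - 'X) ^+ (n - #|A| - i)
  else 0.
exists (\sum_phi Qf phi); rewrite mulr_sumr; apply: eq_bigr => phi _.
set A := [set k | phi k].
rewrite (bigID (fun k => k \in A)) /=.
rewrite (eq_bigr (fun k => 'X * (Dl k)%:P)); last by move=> k; rewrite /A inE /Fk => ->.
rewrite [X in _ * X](eq_bigr (fun k => 1 - 'X)); last first.
  by move=> k; rewrite /A inE /Fk => /negbTE ->.
rewrite big_split /= prodr_const -rmorph_prod /=.
rewrite (prodr_const (fun k => k \notin A)).
have hc : #|[pred k | k \notin A]| = (n - #|A|)%N.
  have -> : #|[pred k | k \notin A]| = #|[predC A]| by apply: eq_card.
  by move: (cardC A); rewrite card_ord; lia.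
rewrite hc /Qf; case: ltnP => hA.
  have hle : (i <= n - #|A|)%N.
    by move: hsize hA; rewrite -/n -/A; lia.
  rewrite -(subnKC hle) exprD -subnDA addnC subnDA.
  by rewrite addKn -/A mulrCA.
have -> : \prod_(k in A) Dl k = 0.
  rewrite big_enum_val; apply: hnil; by rewrite card_ord.
by rewrite polyC0 mulr0 mul0r mulr0.
Qed.


Lemma epsD a b : eps (a + b) = eps a + eps b.
Proof. by rewrite /eps gaE. Qed.

Lemma eps_sign n x : eps (X x) = 0 -> eps ((-1) ^+ n * X x) = 0.
Proof.
rewrite -signr_odd; case: (odd n); rewrite ?expr1 ?expr0 ?mul1r //.
by rewrite mulN1r epsN => ->; rewrite oppr0.
Qed.

Hypothesis hnorm : forall S', submseq S' S -> zero_sum S' -> (size S' <= i)%N.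

Lemma PP_high j : (i < j)%N -> eps (PP S)`_j = 0.
Proof.
move=> hij.
set n := size S.
have -> : PP S = \prod_(k < n) (1 - 'X * (X (nth 0 S k))%:P).
  by rewrite /PP (big_nth 0) big_mkord.
pose Fk (k : 'I_n) (b : bool) : {poly R} :=
  if b then 'X * (- X (nth 0 S k))%:P else 1.
rewrite (eq_bigr (fun k => \sum_(b : bool) Fk k b)); last first.
  by move=> k _; rewrite big_bool /Fk /= polyCN mulrN addrC.
rewrite bigA_distr_bigA /= coef_sum.
rewrite (big_morph eps epsD eps0).
apply: big1 => phi _.
set A := [set k | phi k].
rewrite (bigID (fun k => k \in A)) /=.
rewrite (eq_bigr (fun k : 'I_n => 'X * (- X (nth 0 S k))%:P)); last first.
  by move=> k; rewrite /A inE /Fk => ->.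
rewrite [X in _ * X]big1; last by move=> k; rewrite /A inE /Fk => /negbTE ->.
rewrite mulr1 big_split /= prodr_const -rmorph_prod /= coefXnM coefC.
case: ltnP => hjA; first exact: eps0.
case: eqP => hj; last exact: eps0.
have hA : j = #|A| by apply/eqP; rewrite eqn_leq hjA -subn_eq0 hj.
rewrite (eq_bigr (fun k : 'I_n => (-1) * X (nth 0 S k))); last by move=> k _; rewrite mulN1r.
rewrite big_split /= prodr_const -gXsum.
apply: eps_sign; rewrite epsX.
case: eqP => [hz|]; last by move=> _; rewrite /=.
exfalso.
pose U := map (fun k : 'I_n => nth 0 S k) (enum A).
have hUS : submseq U S.
  move=> x; rewrite /U.
  have -> : enum A = filter (mem A) (enum 'I_n) by rewrite enumT.
  have {2}-> : S = map (fun k : 'I_n => nth 0 S k) (enum 'I_n).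
    by rewrite map_comp val_enum_ord -/n -/(mkseq _ _) mkseq_nth.
  apply: leq_count_subseq; apply: map_subseq; apply: filter_subseq.
have hUz : zero_sum U by rewrite /zero_sum big_map big_enum /=.
have := hnorm hUS hUz; rewrite size_map -cardE -hA.
by rewrite leqNgt hij.
Qed.


Hypothesis hip : (i < p)%N.

Lemma count0 : count_mem 0 S = i.
Proof.
have [Q hQ] := PP_div.
set f := map_poly eps (PP S).
set u := map_poly eps Q.
have hf : f = (1 - 'X) ^+ i * u by rewrite /f hQ map_1Xn.
have hsz : (size f <= i.+1)%N.
  by apply/leq_sizeP => j hj; rewrite coef_map_id0 ?eps0 // PP_high.
have f0 : f`_0 = 1 by rewrite coef_map_id0 ?eps0 // PP0 eps1.
have u0 : u != 0.
  by apply/eqP => hu; move: f0; rewrite hf hu mulr0 coef0 => /eqP; rewrite eq_sym oner_eq0.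
have s1 : size (1 - 'X : {poly F}) = 2.
  by rewrite addrC size_polyDl ?size_polyN ?size_polyX ?size_poly1.
have nz1 : (1 - 'X : {poly F}) != 0 by rewrite -size_poly_gt0 s1.
have szX : size ((1 - 'X) ^+ i : {poly F}) = i.+1.
  have h2 : (0 < size ((1 - 'X) ^+ i : {poly F}))%N by rewrite size_poly_gt0 expf_neq0.
  move: (size_exp (1 - 'X : {poly F}) i) h2; rewrite s1 mul1n.
  by case: (size _) => // m /= ->.
have szu : (size u <= 1)%N.
  move: hsz; rewrite hf size_mul ?expf_neq0 // szX addSn /=.
  by move=> h; rewrite -(leq_add2l i) addn1.
have hu := size1_polyC szu.
have c1 : u`_0 = 1 by move: f0; rewrite hf {1}hu coefMC coef_1Xn0 mul1r.
have f1 : f`_1 = - i%:R by rewrite hf hu coefMC coef_1Xn1 c1 mulr1.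
have hc : (count_mem 0 S)%:R = i%:R :> F.
  by apply: oppr_inj; rewrite -PP1 -f1 /f coef_map_id0 ?eps0.
have hle : (count_mem (0%R : G) S <= i)%N.
  have := hnorm (S' := nseq (count_mem (0%R : G) S) (0%R : G)).
  rewrite size_nseq; apply.
    move=> x; rewrite count_nseq /=; case: eqP => [->|_]; first by rewrite mul1n.
    by rewrite mul0n.
  rewrite /zero_sum big1_seq // => x /andP [_]; rewrite mem_nseq => /andP [_ /eqP ->].
  done.
have hd : (p %| i - count_mem (0%R : G) S)%N.
  by rewrite (dvdn_pcharf (pchar_Fp hp)) natrB // hc subrr.
have hlt : (i - count_mem (0%R : G) S < p)%N by apply: leq_ltn_trans (leq_subr _ _) hip.
have h0 : (i - count_mem (0%R : G) S = 0)%N.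
  move: hd hlt; case: (i - _)%N => [//|k] hd hlt.
  by have := dvdn_leq (ltn0Sn k) hd; rewrite leqNgt hlt.
by apply/eqP; rewrite eqn_leq hle /= -subn_eq0 h0.
Qed.

End Main.

Lemma basis_exists (G : finZmodType) :
  exists r (e : 'I_r -> G),
  [/\ forall g : G, exists k : 'I_r -> nat, g = \sum_(j < r) e j *+ k j,
      forall j, e j *+ #[e j]%g = 0,
      forall k : 'I_r -> nat, (forall j, (k j < #[e j]%g)%N) ->
         \sum_(j < r) e j *+ k j = 0 -> forall j, k j = 0%N
    & injective e].
Proof.
have cGG : abelian [set: G]%G by exact: FinRing.Theory.zmod_abelian.
have [b defG ordb] := abelian_structure cGG.
have gt1 := abelian_type_gt1 [set: G]%G.
rewrite -ordb in gt1.
set r := size b; pose e (j : 'I_r) := nth 0 b j.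
have defG' : (\big[dprod/1]_(j < r) <[e j]>)%g = [set: G].
  by rewrite -defG (big_nth 0) big_mkord.
have uniqd : forall (c1 c2 : 'I_r -> G),
    (forall j, c1 j \in <[e j]>%g) -> (forall j, c2 j \in <[e j]>%g) ->
    \sum_(j < r) c1 j = \sum_(j < r) c2 j -> forall j, c1 j = c2 j.
  move=> c1 c2 h1 h2 heq j.
  have [c [_ _ hu]] := mem_bigdprod defG' (in_setT (\sum_(j < r) c1 j)).
  by rewrite (hu c1 (fun j _ => h1 j) erefl j isT) (hu c2 (fun j _ => h2 j) heq j isT).
have emn : forall j m, e j *+ m \in <[e j]>%g.
  by move=> j m; exact: (mem_cycle (e j) m).
exists r, e; split.
- move=> g.
  have [c [hc hg _]] := mem_bigdprod defG' (in_setT g).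
  have hk : forall j, exists m, c j == e j *+ m.
    by move=> j; have /cycleP [m ->] := hc j isT; exists m.
  exists (fun j => ex_minn (hk j)).
  rewrite hg; apply: eq_bigr => j _.
  by case: ex_minnP => m /eqP.
- by move=> j; exact: (expg_order (e j)).
- move=> k hk hs j.
  have hs' : \sum_(j < r) e j *+ k j = \sum_(j < r) (0 : G) by rewrite hs big1.
  have := uniqd (fun j => e j *+ k j) (fun _ => 0) (fun j => emn j _)
     (fun j => group1 _) hs' j => /= /eqP.
  rewrite -[_ == _]/((e j ^+ k j)%g == 1%g) -order_dvdn => hd.
  apply/eqP; rewrite -leqn0 leqNgt; apply/negP => kp.
  by have := dvdn_leq kp hd; rewrite leqNgt hk.
- move=> j l hjl; apply/eqP; apply: contraT => njl.
  have s1 : forall (x : 'I_r) (y : G),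
      \sum_(i < r) (if i == x then y else 0) = y.
    move=> x y; rewrite (bigD1 x) //= eqxx big1 ?addr0 // => i /negbTE -> //.
  have hin : forall (x i : 'I_r), (if i == x then e x else 0) \in <[e i]>%g.
    move=> x i; case: eqP => [->|_]; [exact: cycle_id | exact: group1].
  have := uniqd (fun i => if i == j then e j else 0)
                (fun i => if i == l then e l else 0) (hin j) (hin l) _ j.
  rewrite !s1 => /(_ hjl); rewrite eqxx (negbTE njl) => hz.
  have := (allP gt1) #[e j]%g (map_f _ (mem_nth 0 (ltn_ord j))).
  by rewrite /= -/(e j) hz -[0]/(1%g : G) order1.
Qed.

Lemma sum_count (G : finZmodType) (U : seq G) :
  \sum_(x <- U) x = \sum_(x : G) x *+ count_mem x U.
Proof.
elim: U => [|u U IH]; first by rewrite big_nil big1 // => x _; rewrite mulr0n.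
rewrite big_cons IH.
have -> : \sum_(x : G) x *+ count_mem x (u :: U) =
    \sum_(x : G) (x *+ (x == u) + x *+ count_mem x U).
  by apply: eq_bigr => x _; rewrite /= mulrnDr eq_sym.
rewrite big_split /=; congr (_ + _).
rewrite (bigD1 u) //= eqxx mulr1n big1 ?addr0 // => x /negbTE ->.
by rewrite mulr0n.
Qed.

Lemma lower_bound (G : finZmodType) r (e : 'I_r -> G) (nord : 'I_r -> nat)
  (hpos : forall j, (0 < nord j)%N)
  (hind : forall k : 'I_r -> nat, (forall j, (k j < nord j)%N) ->
         \sum_(j < r) e j *+ k j = 0 -> forall j, k j = 0%N)
  (hinj : injective e) (D : nat)
  (hD : forall S : seq G, (D <= size S)%N -> has_nonempty_zs S) :
  (\sum_(j < r) (nord j).-1 < D)%N.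
Proof.
pose Z := flatten [seq nseq (nord j).-1 (e j) | j <- enum 'I_r].
have sizeZ : size Z = (\sum_(j < r) (nord j).-1)%N.
  rewrite size_flatten /shape -map_comp sumnE big_map big_enum /=.
  by apply: eq_bigr => j _; rewrite /= size_nseq.
have cZ : forall x, count_mem x Z = (\sum_(j < r) (e j == x) * (nord j).-1)%N.
  move=> x; rewrite count_flatten -map_comp sumnE big_map big_enum /=.
  by apply: eq_bigr => j _; rewrite /= count_nseq.
have cZe : forall j, count_mem (e j) Z = (nord j).-1.
  move=> j; rewrite cZ (bigD1 j) //= eqxx mul1n big1 ?addn0 // => i hij.
  by rewrite (inj_eq hinj) (negbTE hij).
have cZn : forall x, (0 < count_mem x Z)%N -> exists j, e j = x.
  move=> x; rewrite cZ => hx.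
  have [/existsP [j /eqP hj]|/existsPn hn] := boolP [exists j, e j == x].
    by exists j.
  by move: hx; rewrite big1 // => j _; rewrite (negbTE (hn j)).
rewrite ltnNge -sizeZ; apply/negP => /hD [U [hsub hsz hzs]].
pose k j := count_mem (e j) U.
have hk : forall j, (k j < nord j)%N.
  by move=> j; apply: leq_ltn_trans (hsub (e j)) _; rewrite cZe prednK ?hpos.
have hsum : \sum_(j < r) e j *+ k j = 0.
  rewrite -[RHS]hzs /zero_sum sum_count.
  rewrite (bigID (fun x => x \in [set e j | j in [set: 'I_r]])) /=.
  rewrite [X in _ = _ + X]big1 ?addr0; last first.
    move=> x hx; suff -> : count_mem x U = 0%N by rewrite mulr0n.
    apply/eqP; rewrite -leqn0 leqNgt; apply/negP => hc.
    have [j hj] := cZn x (leq_trans hc (hsub x)).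
    by move: hx; rewrite -hj imset_f.
  rewrite big_imset /=; last by move=> i j _ _; apply: hinj.
  by apply: eq_big => // i; rewrite inE.
have h0 := hind k hk hsum.
have [u uU] : exists u, u \in U.
  by case: (U) hsz => [|u ? _] //; exists u; rewrite inE eqxx.
have huU : (0 < count_mem u U)%N by rewrite -has_count has_pred1.
have hu : (0 < count_mem u Z)%N by apply: leq_trans huU (hsub u).
have [j hj] := cZn u hu.
by have := h0 j; rewrite /k hj => hc; move: huU; rewrite hc.
Qed.


Unset Implicit Arguments.

Theorem corollary2p2 (p : nat) (H G : finZmodType) (f : G -> ('Z_p * H)%type)
  (D : nat) (S : seq G) (i : nat) :
  prime p ->
  p.-nat #|H| ->
  (forall x y : G, f (x + y) = f x + f y) ->
  bijective f ->
  is_davenport G D ->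
  normal_seq D S ->
  size S = (D + i - 1)%N ->
  (1 <= i <= p - 1)%N ->
  exists T : seq G, perm_eq S (nseq i 0 ++ T) /\ zero_sumfree T.
Proof.
move=> hp hH _ hbij [hD1 hD _] [hDS hnS] hsz /andP [hi1 hi2].
have hpG : p.-nat #|G|.
  rewrite (bij_eq_card hbij) card_prod pnatM hH andbT card_ord Zp_cast ?prime_gt1 //.
  exact: pnat_id.
have [r [e [hgen hord hind hinj]]] := basis_exists G.
pose nord (j : 'I_r) := #[e j]%g.
have hpos : forall j, (0 < nord j)%N by move=> j; exact: order_gt0.
have hlow := lower_bound hpos hind hinj hD.
have hchar : p \in [pchar (ga G 'F_p)].
  rewrite inE hp /=; apply/eqP/ffunP => g.
  by rewrite ffunMnE ga1 ga0 -mulrnA mulnC mulrnA pchar_Fp_0 // mul0rn.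
have hy : forall j, (gX 'F_p (e j) - 1) ^+ nord j = 0.
  move=> j.
  have hn : p.-nat (nord j).
    by apply: pnat_dvd hpG; rewrite -cardsT; apply: order_dvdG; rewrite inE.
  have hn' : [pchar (ga G 'F_p)].-nat (nord j).
    apply: sub_in_pnat hn => q _; rewrite inE => /eqP ->; exact: hchar.
  rewrite exprDn_pchar // exprNn_pchar // expr1n -gXMn hord gX0 subrr //.
have hnil : forall (I : finType) (s : I -> G),
    (D <= #|I|)%N -> \prod_(k : I) (1 - gX 'F_p (s k)) = 0.
  move=> I s hI; apply: (nilpotent hgen hy); rewrite /Dstar.
  exact: leq_trans hlow hI.
have hsize : (size S + 1 = D + i)%N by rewrite hsz; lia.
have hnorm : forall S', submseq S' S -> zero_sum S' -> (size S' <= i)%N.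
  by move=> S' h1 h2; have := hnS S' h1 h2; rewrite hsz; lia.
have hip : (i < p)%N by move: hi2 (prime_gt1 hp); lia.
have hc := count0 hp hnil hsize hnorm hip.
have hfl : forall s : seq G, filter (pred1 0) s = nseq (count_mem 0 s) 0.
  by elim => //= x s IH; rewrite IH; case: eqP => [->|_] //=.
exists (filter (fun x => x != 0) S); split.
  rewrite perm_sym -hc -hfl; apply/permPl; exact: (perm_filterC (pred1 0) S).
move=> [U [hsub hszU hzs]].
have hz : count_mem (0%R : G) (filter (fun x => x != 0) S) = 0%N.
  by apply/count_memPn; rewrite mem_filter eqxx.
have hs : submseq (nseq i 0 ++ U) S.
  move=> x; rewrite count_cat count_nseq /=.
  have := hsub x; case: eqP => [<-|_].
    by rewrite hz leqn0 => /eqP ->; rewrite mul1n addn0 hc.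
  move=> h; rewrite mul0n add0n; apply: leq_trans h _.
  by apply: leq_count_subseq; apply: filter_subseq.
have hzz : zero_sum (nseq i 0 ++ U).
  rewrite /zero_sum big_cat /= hzs addr0 big1_seq // => x /andP [_].
  by rewrite mem_nseq => /andP [_ /eqP].
have := hnorm _ hs hzz; rewrite size_cat size_nseq.
by move: hszU; lia.
Qed.
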